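(* Let $\mathcal{E}=\{\eta_{i},\rho_{i}\}_{i\in\mathbb{N}_{n}}$ be an ensemble and let $H\in\mathbb{H}(\mathcal{E})$ satisfy $\Tr H=q_{\sf G}(\mathcal{E})$. Then $\Pi(\mathcal{E})H\Pi(\mathcal{E})=H$, where $\Pi(\mathcal{E})$ is the orthogonal projection onto the support of $\rho_0=\sum_i\eta_i\rho_i$.
   Context: $\mathbb{N}_{n}=\{1,\ldots,n\}$. $\mathcal{H}$ is a finite-dimensional complex Hilbert space, $\mathbb{H}$ the Hermitian operators on it, $\mathbb{H}_{+}$ the positive-semidefinite ones. An ensemble: density operators $\rho_i$ with probabilities $\eta_i>0$ summing to $1$. A measurement is $\{M_{?}\}\cup\{M_{i}\}_{i\in\mathbb{N}_{n}}\subseteq\mathbb{H}_+$ summing to the identity. $\mathcal{C}_{i}(\mathcal{E})$ is the maximum of $\eta_{i}\Tr(\rho_{i}M_{i})/\Tr(\rho_{0}M_{i})$ over measurements with $\Tr(\rho_{0}M_{i})>0$. $\mathbb{M}_{i}(\mathcal{E})=\{E\in\mathbb{H}_{+}\mid\Tr[(\mathcal{C}_{i}(\mathcal{E})\rho_{0}-\eta_{i}\rho_{i})E]=0\}$, $\mathbb{M}_{i}^{*}(\mathcal{E})=\{E\in\mathbb{H}\mid\Tr(EF)\ge0\ \forall F\in\mathbb{M}_{i}(\mathcal{E})\}$, $\mathbb{H}(\mathcal{E})=\{H\in\mathbb{H}_{+}\mid H-\eta_{i}\rho_{i}\in\mathbb{M}_{i}^{*}(\mathcal{E})\ \forall i\in\mathbb{N}_n\}$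 and $q_{\sf G}(\mathcal{E})=\min_{H\in\mathbb{H}(\mathcal{E})}\Tr H$. *)

(* Defs.v *)
(* Complex scalars: an arbitrary numClosedFieldType C
   (e.g. algC or complex R); the Hilbert space is C^d (row vectors). *)
From HB Require Import structures.
From mathcomp Require Import all_boot all_order all_algebra.
From mathcomp Require Import sesquilinear spectral.
Set Implicit Arguments. Unset Strict Implicit. Unset Printing Implicit Defensive.
Import Order.TTheory GRing.Theory Num.Theory.
Local Open Scope ring_scope.
Local Open Scope sesquilinear_scope.

Section QDefs.
Variable C : numClosedFieldType.

Definition hermitian d (A : 'M[C]_d) : Prop := A ^t* = A.

Definition psd d (A : 'M[C]_d) : Prop :=
  hermitian A /\ forall v : 'rV[C]_d, 0 <= (v *m A *m v ^t*) 0 0.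

Definition density d (rho : 'M[C]_d) : Prop := psd rho /\ \tr rho = 1.

Definition is_ensemble n d (eta : 'I_n -> C) (rho : 'I_n -> 'M[C]_d) : Prop :=
  (forall i, 0 < eta i) /\ \sum_(i < n) eta i = 1 /\ (forall i, density (rho i)).

Definition rho0 n d (eta : 'I_n -> C) (rho : 'I_n -> 'M[C]_d) : 'M[C]_d :=
  \sum_(i < n) eta i *: rho i.

Definition measurement n d (Mq : 'M[C]_d) (M : 'I_n -> 'M[C]_d) : Prop :=
  psd Mq /\ (forall i, psd (M i)) /\ Mq + \sum_(i < n) M i = 1%:M.

Definition Cvalues n d (eta : 'I_n -> C) (rho : 'I_n -> 'M[C]_d) (i : 'I_n)
  (r : C) : Prop :=
  exists (Mq : 'M[C]_d) (M : 'I_n -> 'M[C]_d), measurement Mq M /\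
    0 < \tr (rho0 eta rho *m M i) /\
    r = eta i * \tr (rho i *m M i) / \tr (rho0 eta rho *m M i).

Definition is_Ci n d (eta : 'I_n -> C) (rho : 'I_n -> 'M[C]_d) (i : 'I_n)
  (c : C) : Prop :=
  Cvalues eta rho i c /\ forall r, Cvalues eta rho i r -> r <= c.

Definition Mset n d (eta : 'I_n -> C) (rho : 'I_n -> 'M[C]_d) (c : C) (i : 'I_n)
  (E : 'M[C]_d) : Prop :=
  psd E /\ \tr ((c *: rho0 eta rho - eta i *: rho i) *m E) = 0.

Definition Mdual n d (eta : 'I_n -> C) (rho : 'I_n -> 'M[C]_d) (c : C) (i : 'I_n)
  (E : 'M[C]_d) : Prop :=
  hermitian E /\ forall F, Mset eta rho c i F -> 0 <= \tr (E *m F).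

Definition Hset n d (eta : 'I_n -> C) (rho : 'I_n -> 'M[C]_d) (cs : 'I_n -> C)
  (H : 'M[C]_d) : Prop :=
  psd H /\ forall i, Mdual eta rho (cs i) i (H - eta i *: rho i).

Definition is_qG n d (eta : 'I_n -> C) (rho : 'I_n -> 'M[C]_d) (cs : 'I_n -> C)
  (q : C) : Prop :=
  (exists H, Hset eta rho cs H /\ \tr H = q) /\
  forall H, Hset eta rho cs H -> q <= \tr H.

(* P is the orthogonal projection onto the support (range) of the Hermitian A.
   Operators act on row vectors (v |-> v *m A), so the range is the row space. *)
Definition is_support_proj d (P A : 'M[C]_d) : Prop :=
  hermitian P /\ P *m P = P /\ (P == A)%MS.

End QDefs.

(* Main.v *)
Require Import Defs.
From HB Require Import structures.
From mathcomp Require Import all_boot all_order all_algebra.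
From mathcomp Require Import sesquilinear spectral ring.
Import Order.TTheory GRing.Theory Num.Theory Num.Def.
Local Open Scope ring_scope.
Local Open Scope sesquilinear_scope.

Section H.
Variable C : numClosedFieldType.

Lemma ctM m n p (A : 'M[C]_(m,n)) (B : 'M[C]_(n,p)) : (A *m B)^t* = B^t* *m A^t*.
Proof. by rewrite trmx_mul map_mxM. Qed.
Lemma ctD m n (A B : 'M[C]_(m,n)) : (A + B)^t* = A^t* + B^t*.
Proof. by rewrite linearD map_mxD. Qed.
Lemma ctB m n (A B : 'M[C]_(m,n)) : (A - B)^t* = A^t* - B^t*.
Proof. by rewrite linearB map_mxB. Qed.
Lemma ctZ m n a (A : 'M[C]_(m,n)) : (a *: A)^t* = a^* *: A^t*.
Proof. by rewrite linearZ map_mxZ. Qed.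
Lemma ct1 n : (1%:M : 'M[C]_n)^t* = 1%:M.
Proof. by rewrite trmx1 map_mx1. Qed.

Lemma form_conj d (A : 'M[C]_d) (x y : 'rV[C]_d) : Defs.hermitian A ->
  ((y *m A *m x^t*) 0 0)^* = (x *m A *m y^t*) 0 0.
Proof.
move=> hA.
have -> : ((y *m A *m x^t*) 0 0)^* = ((y *m A *m x^t*)^t*) 0 0 by rewrite !mxE.
by rewrite !ctM trmxCK hA mulmxA.
Qed.


Lemma eq0_rows d m (A : 'M[C]_(m,d)) : (forall v : 'rV[C]_m, v *m A = 0) -> A = 0.
Proof. by move=> h; apply/row_matrixP => k; rewrite rowE h row0. Qed.

Lemma psd_kill d (A : 'M[C]_d) (v : 'rV[C]_d) : psd A ->
  (v *m A *m v^t*) 0 0 = 0 -> v *m A = 0.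
Proof.
move=> [hA pA] h0.
have key : forall w : 'rV[C]_d, (v *m A *m w^t*) 0 0 = 0.
  move=> w.
  pose b := (v *m A *m w^t*) 0 0.
  pose a := (w *m A *m w^t*) 0 0.
  have a0 : 0 <= a by apply: pA.
  have a1 : 0 < a + 1 by apply: ltr_wpDl.
  pose r := (a + 1)^-1.
  have r0 : 0 < r by rewrite invr_gt0.
  pose t := - (b * r).
  have := pA (v + t *: w).
  have E : ((v + t *: w) *m A *m (v + t *: w)^t*) 0 0 =
           form conjC A (v + t *: w) (v + t *: w) by [].
  rewrite E formDl !formDr !formZl !formZr.
  rewrite /form h0 -/a -/b.
  rewrite -(form_conj _ A w v hA) -/b.
  have ct : conjC t = - (conjC b * r).
    rewrite /t rmorphN rmorphM /= /r; congr (- (_ * _)).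
    by rewrite geC0_conj // ltW // invr_gt0.
  set B := b * conjC b.
  have B0 : 0 <= B by rewrite /B -normCK exprn_ge0.
  have -> : 0 + conjC t * b + (t * conjC b + t * (conjC t * a))
     = (r * B) * (r * a - 2).
    rewrite ct /t /B; ring.
  have ra : r * a - 2 < 0.
    rewrite subr_lt0 mulrC -/(a / (a+1)) ltr_pdivrMr //.
    apply: (@lt_le_trans _ _ (a + 1)); first by rewrite ltrDl.
    rewrite ler_peMl // ?ltW //. by rewrite ltr1n.
  rewrite (nmulr_lge0 _ ra) pmulr_rle0 // => B0'.
  have : B = 0 by apply/le_anti; rewrite B0 B0'.
  by rewrite /B -normCK => /eqP; rewrite sqrf_eq0 normr_eq0 => /eqP.
apply/rowP => k.
have := key (delta_mx 0 k).
rewrite trmx_delta map_delta_mx -colE mxE => ->.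
by rewrite mxE.
Qed.

Lemma psd_conj d (A P : 'M[C]_d) : psd A -> P^t* = P -> psd (P *m A *m P).
Proof.
move=> [hA pA] hP; split.
  by rewrite /Defs.hermitian !ctM hP hA mulmxA.
move=> v.
have -> : v *m (P *m A *m P) *m v^t* = (v *m P) *m A *m (v *m P)^t*.
  by rewrite ctM hP !mulmxA.
exact: pA.
Qed.

Lemma diag_form d (A : 'M[C]_d) k :
  A k k = ((delta_mx 0 k : 'rV[C]_d) *m A *m (delta_mx 0 k : 'rV[C]_d)^t*) 0 0.
Proof. by rewrite -(@formee C conjC d A k k). Qed.

Lemma form_sum n d (eta : 'I_n -> C) (rho : 'I_n -> 'M[C]_d) (x y : 'rV[C]_d) :
  (x *m rho0 eta rho *m y^t*) 0 0 = \sum_i eta i * (x *m rho i *m y^t*) 0 0.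
Proof.
rewrite /rho0 mulmx_sumr mulmx_suml summxE; apply: eq_bigr => i _.
by rewrite -scalemxAr -scalemxAl mxE.
Qed.
End H.

Theorem lemma3 (C : numClosedFieldType) (n d : nat)
  (eta : 'I_n -> C) (rho : 'I_n -> 'M[C]_d)
  (cs : 'I_n -> C) (q : C) (H Pi : 'M[C]_d) :
  is_ensemble eta rho ->
  (forall i, is_Ci eta rho i (cs i)) ->
  is_qG eta rho cs q ->
  Hset eta rho cs H ->
  \tr H = q ->
  is_support_proj Pi (rho0 eta rho) ->
  Pi *m H *m Pi = H.
Proof.
move=> [eta_pos [_ dens]] _ [_ qmin] [psdH dualH] trH [hPi [idPi subPi]].
have r0Pi : rho0 eta rho *m Pi = rho0 eta rho.
  have /submxP [D ->] : (rho0 eta rho <= Pi)%MS by case/andP: subPi.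
  by rewrite -mulmxA idPi.
pose Q := 1%:M - Pi.
have hQ : Q^t* = Q by rewrite /Q ctB ct1 hPi.
have idQ : Q *m Q = Q.
  by rewrite /Q mulmxBl mul1mx mulmxBr mulmx1 idPi subrr subr0.
have r0Q : rho0 eta rho *m Q = 0 by rewrite /Q mulmxBr mulmx1 r0Pi subrr.
have hrho i : (rho i)^t* = rho i by case: (dens i) => [[]].
have etaC i : conjC (eta i) = eta i by rewrite geC0_conj // ltW.
have rhoQ i : Q *m rho i = 0.
  apply: eq0_rows => v; rewrite mulmxA; have K := @psd_kill C d (rho i) (v *m Q) (proj1 (dens i)). apply: K.
  have S : ((v *m Q) *m rho0 eta rho *m (v *m Q)^t*) 0 0 = 0.
    rewrite ctM hQ -!mulmxA (mulmxA (rho0 eta rho) Q) r0Q mul0mx !mulmx0.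
    by rewrite mxE.
  have nn : forall j : 'I_n, true -> 0 <= eta j * (v *m Q *m rho j *m (v *m Q)^t*) 0 0.
    move=> j _; apply: mulr_ge0; first exact: ltW.
    exact: (proj2 (proj1 (dens j))).
  move: S; rewrite form_sum => /(psumr_eq0P nn) S.
  have /eqP := S i isT.
  by rewrite mulf_eq0 (gt_eqF (eta_pos i)) /= => /eqP.
have rhoPi i : rho i *m Pi = rho i.
  have : (Q *m rho i)^t* = 0 by rewrite rhoQ; apply/matrixP=> a b; rewrite !mxE conjC0.
  rewrite ctM hrho hQ /Q mulmxBr mulmx1 => /eqP; rewrite subr_eq0 => /eqP <-.
  by [].
have Pirho i : Pi *m rho i = rho i.
  by move: (rhoQ i); rewrite /Q mulmxBl mul1mx => /eqP; rewrite subr_eq0 => /eqP <-.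
have Pir0 : Pi *m rho0 eta rho = rho0 eta rho.
  by rewrite /rho0 mulmx_sumr; apply: eq_bigr => i _; rewrite -scalemxAr Pirho.
have XPi i : (cs i *: rho0 eta rho - eta i *: rho i) *m Pi = cs i *: rho0 eta rho - eta i *: rho i.
  by rewrite mulmxBl -!scalemxAl r0Pi rhoPi.
have PiX i : Pi *m (cs i *: rho0 eta rho - eta i *: rho i) = cs i *: rho0 eta rho - eta i *: rho i.
  by rewrite mulmxBr -!scalemxAr Pir0 Pirho.
have HsetP : Hset eta rho cs (Pi *m H *m Pi).
  split; first exact: psd_conj psdH hPi.
  move=> i; split.
    by rewrite /Defs.hermitian ctB ctZ etaC hrho !ctM hPi (proj1 psdH) mulmxA.
  move=> F [psdF trF].
  have MF : Mset eta rho (cs i) i (Pi *m F *m Pi).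
    split; first exact: psd_conj psdF hPi.
    rewrite !mulmxA XPi mxtrace_mulC mulmxA PiX //.
  have := (proj2 (dualH i)) _ MF.
  rewrite !mulmxA mxtrace_mulC !mulmxA mulmxBr mulmxBl -!scalemxAr -!scalemxAl Pirho rhoPi.
  by [].
have trHp : \tr (Pi *m H *m Pi) = \tr (H *m Pi).
  by rewrite mxtrace_mulC mulmxA idPi mxtrace_mulC.
have trHQ : \tr (H *m Q) <= 0.
  have := qmin _ HsetP; rewrite trHp -trH.
  by rewrite /Q mulmxBr mulmx1 linearB /= subr_le0.
pose e (k : 'I_d) : 'rV[C]_d := delta_mx 0 k.
have trQ : \tr (H *m Q) = \sum_k (e k *m Q *m H *m (e k *m Q)^t*) 0 0.
  rewrite -{1}idQ mulmxA mxtrace_mulC mulmxA /mxtrace; apply: eq_bigr => k _.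
  by rewrite (@diag_form C d (Q *m H *m Q)) ctM hQ !mulmxA.
have nnk : forall k : 'I_d, true -> 0 <= (e k *m Q *m H *m (e k *m Q)^t*) 0 0.
  by move=> k _; apply: (proj2 psdH).
have sum0 : \sum_k (e k *m Q *m H *m (e k *m Q)^t*) 0 0 = 0.
  by apply/le_anti/andP; split; [rewrite -trQ | exact: sumr_ge0].
have QH : Q *m H = 0.
  apply/row_matrixP => k; rewrite rowE row0 mulmxA.
  have K := @psd_kill C d H (e k *m Q) psdH.
  by apply: K; apply: (psumr_eq0P nnk sum0).
have HQ : H *m Q = 0.
  have : (Q *m H)^t* = 0 by rewrite QH; apply/matrixP=> a b; rewrite !mxE conjC0.
  by rewrite ctM hQ (proj1 psdH).
have PiH : Pi *m H = H.
  by move: QH; rewrite /Q mulmxBl mul1mx => /eqP; rewrite subr_eq0 => /eqP <-.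
have HPi : H *m Pi = H.
  by move: HQ; rewrite /Q mulmxBr mulmx1 => /eqP; rewrite subr_eq0 => /eqP <-.
by rewrite PiH HPi.
Qed.
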